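(* Let $(X,\mathcal{T})$ be an anti-topological space with $|X|>3$. Then $(X,\mathcal{T})$ is not a door anti-topological space.
   Context: Let $X$ be a non-empty set. A family $\mathcal{T}\subseteq P(X)$ is an anti-topology on $X$ (and $(X,\mathcal{T})$ is an anti-topological space) if: (i) $\emptyset\notin\mathcal{T}$ and $X\notin\mathcal{T}$; (ii) for every $n\in\mathbb{N}$ and all $A_1,\dots,A_n\in\mathcal{T}$ that are not all equal, $\bigcap_{i=1}^n A_i\notin\mathcal{T}$; (iii) for every non-empty index set $J$ and all sets $A_i\in\mathcal{T}$ ($i\in J$) that are not all equal, $\bigcup_{i\in J}A_i\notin\mathcal{T}$. Elements of $\mathcal{T}$ are called anti-open; a set is anti-closed if its complement is anti-open. $(X,\mathcal{T})$ is a door anti-topological space if every subset $A\subseteq X$ with $A\neq\emptyset$ and $A\neq X$ is anti-open or anti-closed. *)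

(* Defs.v *)
(* Equality of subsets is Leibniz equality
   (which coincides with extensional equality under the whitelisted
   functional/propositional extensionality axioms). *)
From Stdlib Require Import Classical FunctionalExtensionality PropExtensionality.

Definition subset_of (X : Type) := X -> Prop.
Definition emptyset {X : Type} : subset_of X := fun _ => False.
Definition fullset {X : Type} : subset_of X := fun _ => True.
Definition complement {X : Type} (A : subset_of X) : subset_of X := fun x => ~ A x.

Definition fin_inter {X : Type} (n : nat) (A : nat -> subset_of X) : subset_of X :=
  fun x => forall i, i < n -> A i x.

Definition big_union {X : Type} {J : Type} (A : J -> subset_of X) : subset_of X :=
  fun x => exists j, A j x.

Definition anti_topology {X : Type} (T : subset_of X -> Prop) : Prop :=
  (~ T emptyset /\ ~ T fullset) /\
  (forall (n : nat) (A : nat -> subset_of X),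
      (forall i, i < n -> T (A i)) ->
      (exists i j, i < n /\ j < n /\ A i <> A j) ->
      ~ T (fin_inter n A)) /\
  (forall (J : Type) (A : J -> subset_of X),
      inhabited J ->
      (forall j, T (A j)) ->
      (exists i j, A i <> A j) ->
      ~ T (big_union A)).

Definition anti_open {X : Type} (T : subset_of X -> Prop) (A : subset_of X) : Prop := T A.
Definition anti_closed {X : Type} (T : subset_of X -> Prop) (A : subset_of X) : Prop :=
  T (complement A).

Definition door_anti_topology {X : Type} (T : subset_of X -> Prop) : Prop :=
  forall A : subset_of X, A <> emptyset -> A <> fullset ->
    anti_open T A \/ anti_closed T A.

Definition card_gt3 (X : Type) : Prop :=
  exists a b c d : X,
    a <> b /\ a <> c /\ a <> d /\ b <> c /\ b <> d /\ c <> d.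

(* Main.v *)
Require Import Defs.
From Stdlib Require Import Classical FunctionalExtensionality PropExtensionality.

Lemma set_ext {X : Type} (A B : subset_of X) : (forall x, A x <-> B x) -> A = B.
Proof. intro H; apply functional_extensionality; intro x; apply propositional_extensionality; auto. Qed.

Lemma neq_at {X : Type} (A B : subset_of X) p : A p -> ~ B p -> A <> B.
Proof. intros HA HB E; subst; contradiction. Qed.

Section S.
Variable X : Type.
Variable T : subset_of X -> Prop.
Hypothesis HT : anti_topology T.

Definition f3 (A B C : subset_of X) (n : nat) : subset_of X :=
  match n with 0 => A | 1 => B | _ => C end.

Lemma union3 A B C U : T A -> T B -> T C -> A <> B ->
  (forall x, U x <-> A x \/ B x \/ C x) -> ~ T U.
Proof.
  intros HA HB HC Hne HU.
  destruct HT as [_ [_ Hu]].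
  assert (E : U = big_union (f3 A B C)).
  { apply set_ext; intro x; rewrite HU; unfold big_union; split.
    - intros [h|[h|h]]; [exists 0|exists 1|exists 2]; exact h.
    - intros [[|[|j]] h]; simpl in h; tauto. }
  rewrite E; apply Hu.
  - exact (inhabits 0).
  - intros [|[|j]]; simpl; auto.
  - exists 0, 1; simpl; auto.
Qed.

Lemma union2 A B U : T A -> T B -> A <> B ->
  (forall x, U x <-> A x \/ B x) -> ~ T U.
Proof.
  intros HA HB Hne HU; apply (union3 A B B); auto.
  intro x; rewrite HU; tauto.
Qed.

Lemma inter3 A B C U : T A -> T B -> T C -> A <> B ->
  (forall x, U x <-> A x /\ B x /\ C x) -> ~ T U.
Proof.
  intros HA HB HC Hne HU.
  destruct HT as [_ [Hi _]].
  assert (E : U = fin_inter 3 (f3 A B C)).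
  { apply set_ext; intro x; rewrite HU; unfold fin_inter; split.
    - intros [h1 [h2 h3]] [|[|j]] Hj; simpl; auto.
    - intro h. split; [apply (h 0)|split; [apply (h 1)|apply (h 2)]]; auto. }
  rewrite E; apply Hi.
  - intros [|[|j]] Hj; simpl; auto.
  - exists 0, 1; simpl; auto.
Qed.

Lemma inter2 A B U : T A -> T B -> A <> B ->
  (forall x, U x <-> A x /\ B x) -> ~ T U.
Proof.
  intros HA HB Hne HU; apply (inter3 A B B); auto.
  intro x; rewrite HU; tauto.
Qed.

Hypothesis HD : door_anti_topology T.

Lemma door S p q : S p -> ~ S q -> T S \/ T (complement S).
Proof.
  intros Hp Hq. apply HD.
  - intro E; rewrite E in Hp; exact Hp.
  - intro E; rewrite E in Hq; apply Hq; exact I.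
Qed.

Definition sing (a : X) : subset_of X := fun x => x = a.

Lemma mixed x y z : T (sing x) -> T (complement (sing y)) -> x <> y -> z <> x -> z <> y -> False.
Proof.
  intros H1 H2 nxy nzx nzy.
  apply (union2 _ _ (complement (sing y)) H1 H2).
  - intro E; symmetry in E; revert E; apply (neq_at _ _ z); unfold sing, complement; auto.
  - intro w; unfold sing, complement; split; [tauto|].
    intros [h|h]; [subst; auto|auto].
  - exact H2.
Qed.

Lemma threeO a b c d : a <> b -> a <> c -> a <> d -> b <> c -> b <> d -> c <> d ->
  T (sing a) -> T (sing b) -> T (sing c) -> False.
Proof.
  intros ab ac ad bc bd cd Ha Hb Hc.
  unfold sing in *.
  assert (Sab : T (complement (fun x => x = a \/ x = b))).
  { destruct (door (fun x => x = a \/ x = b) a c) as [h|h]; auto.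
    - intros [h|h]; auto.
    - exfalso; apply (union2 _ _ _ Ha Hb) in h; auto.
      + apply (neq_at _ _ a); auto.
      + tauto. }
  assert (Sac : T (complement (fun x => x = a \/ x = c))).
  { destruct (door (fun x => x = a \/ x = c) a b) as [h|h]; auto.
    - intros [h|h]; auto.
    - exfalso; apply (union2 _ _ _ Ha Hc) in h; auto.
      + apply (neq_at _ _ a); auto.
      + tauto. }
  destruct (door (fun x => x = a \/ x = b \/ x = c) a d) as [h|h]; auto.
  - intros [h|[h|h]]; auto.
  - apply (union3 _ _ _ _ Ha Hb Hc) in h; auto.
    + apply (neq_at _ _ a); auto.
    + tauto.
  - apply (inter2 _ _ _ Sab Sac) in h; auto.
    + apply (neq_at _ _ c); unfold complement; intuition.
    + unfold complement; tauto.
Qed.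

Lemma threeC a b c d : a <> b -> a <> c -> a <> d -> b <> c -> b <> d -> c <> d ->
  T (complement (sing a)) -> T (complement (sing b)) -> T (complement (sing c)) -> False.
Proof.
  intros ab ac ad bc bd cd Ha Hb Hc.
  unfold sing, complement in *.
  assert (Sab : T (fun x => x = a \/ x = b)).
  { destruct (door (fun x => x = a \/ x = b) a c) as [h|h]; auto.
    - intros [h|h]; auto.
    - exfalso; apply (inter2 _ _ _ Ha Hb) in h; auto.
      + apply (neq_at _ _ b); auto.
      + unfold complement; tauto. }
  assert (Sac : T (fun x => x = a \/ x = c)).
  { destruct (door (fun x => x = a \/ x = c) a b) as [h|h]; auto.
    - intros [h|h]; auto.
    - exfalso; apply (inter2 _ _ _ Ha Hc) in h; auto.
      + apply (neq_at _ _ c); auto.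
      + unfold complement; tauto. }
  destruct (door (fun x => x = a \/ x = b \/ x = c) a d) as [h|h]; auto.
  - intros [h|[h|h]]; auto.
  - apply (union2 _ _ _ Sab Sac) in h; auto.
    + apply (neq_at _ _ b); intuition.
    + tauto.
  - apply (inter3 _ _ _ _ Ha Hb Hc) in h; auto.
    + apply (neq_at _ _ b); auto.
    + unfold complement; tauto.
Qed.

Lemma oc a b : a <> b -> T (sing a) \/ T (complement (sing a)).
Proof. intro ab; apply (door _ a b); unfold sing; auto. Qed.

End S.

Theorem mainTheorem15 (X : Type) (T : subset_of X -> Prop) :
  anti_topology T -> card_gt3 X -> ~ door_anti_topology T.
Proof.
  intros HT [a [b [c [d [ab [ac [ad [bc [bd cd]]]]]]]]] HD.
  destruct (oc X T HD a b ab) as [Ha|Ha];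
  destruct (oc X T HD b a (not_eq_sym ab)) as [Hb|Hb];
  destruct (oc X T HD c a (not_eq_sym ac)) as [Hc|Hc].
  - exact (threeO X T HT HD a b c d ab ac ad bc bd cd Ha Hb Hc).
  - exact (mixed X T HT a c b Ha Hc ac (not_eq_sym ab) bc).
  - exact (mixed X T HT a b c Ha Hb ab (not_eq_sym ac) (not_eq_sym bc)).
  - exact (mixed X T HT a b c Ha Hb ab (not_eq_sym ac) (not_eq_sym bc)).
  - exact (mixed X T HT b a c Hb Ha (not_eq_sym ab) (not_eq_sym bc) (not_eq_sym ac)).
  - exact (mixed X T HT b c a Hb Hc bc ab ac).
  - exact (mixed X T HT c a b Hc Ha (not_eq_sym ac) bc (not_eq_sym ab)).
  - exact (threeC X T HT HD a b c d ab ac ad bc bd cd Ha Hb Hc).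
Qed.
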